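(* Let $D$ be a strongly connected orientation of $G^\circ$ (the graph $G$ with its bridges deleted) and let $v^D\in H$ be the unique flow with $2\langle v^D,x^C\rangle=q(x^C)$ for every circuit $C\subseteq D$. Then $2\,q(v^D)=\sum_{e\in D}v^D_e$.
   Context: $G=(V,E)$ is a finite connected graph, possibly with parallel edges and loops; $\mathbb E$ is the set of oriented edges ($e$ and its reverse $\bar e$). Real $1$-chains $x:\mathbb E\to\mathbb R$ satisfy $x_{\bar e}=-x_e$; $\langle x,y\rangle=\sum_{e\in E}x_ey_e$, $q(x)=\langle x,x\rangle$. A flow satisfies $\sum_{e\text{ with tail }v}x_e=0$ at every vertex $v$; $H$ is the space of real flows. A circuit is an orientation of a cycle as a directed cycle; $x^C_e=1$ if $e\in C$, $-1$ if $\bar e\in C$, $0$ otherwise. An orientation (a set of oriented edges with exactly one of $e,\bar e$ per edge) is strongly connected if on each connected component any two vertices are joined by directed paths in both directions. *)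

(* Defs.v *)
From HB Require Import structures.
From mathcomp Require Import all_boot all_order all_algebra.
Set Implicit Arguments. Unset Strict Implicit. Unset Printing Implicit Defensive.
Import Order.TTheory GRing.Theory Num.Theory.
Local Open Scope ring_scope.

(* A finite multigraph (loops and parallel edges allowed): vertex type V,
   edge type E, each edge e given with a reference orientation tl e -> hd e.
   Oriented edges are pairs (e, b) : E * bool; (e,false) is the reference
   orientation of e and (e,true) its reverse \bar e. *)

Section Graph.
Variables (V E : finType) (tl hd : E -> V).

Definition otail (o : E * bool) : V := if o.2 then hd o.1 else tl o.1.
Definition ohead (o : E * bool) : V := if o.2 then tl o.1 else hd o.1.

Definition adjS (S : pred E) : rel V :=
  fun u w => [exists e, S e && (((tl e == u) && (hd e == w)) ||
                                ((tl e == w) && (hd e == u)))].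

Definition connected_graph : Prop := forall u w, connect (adjS predT) u w.

Definition bridge (e : E) : bool :=
  ~~ connect (adjS (predC1 e)) (tl e) (hd e).

Definition nonbridge : pred E := fun e => ~~ bridge e.

Definition orientation_of_Gcirc (D : {set E * bool}) : Prop :=
  forall e, if bridge e then ((e, false) \notin D) && ((e, true) \notin D)
            else ((e, false) \in D) != ((e, true) \in D).

Definition arcD (D : {set E * bool}) : rel V :=
  fun u w => [exists o in D, (otail o == u) && (ohead o == w)].

(* strongly connected: on each connected component (of G°, whose edge set
   is that of D) any two vertices are joined by a directed path of D *)
Definition strongly_connected (D : {set E * bool}) : Prop :=
  forall u w, connect (adjS nonbridge) u w -> connect (arcD D) u w.

Definition is_circuit (c : seq (E * bool)) : Prop :=
  [/\ c != [::], cycle (fun a b => ohead a == otail b) c,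
      uniq (map fst c) & uniq (map otail c)].

Variable R : realFieldType.

(* real 1-chains are represented by their values on reference orientations;
   the value on an oriented edge is given by ochain *)
Definition ochain (x : E -> R) (o : E * bool) : R :=
  if o.2 then - x o.1 else x o.1.

Definition is_flow (x : E -> R) : Prop :=
  forall v : V, \sum_(o : E * bool | otail o == v) ochain x o = 0.

Definition inner (x y : E -> R) : R := \sum_(e : E) x e * y e.
Definition qf (x : E -> R) : R := inner x x.

Definition circ_chain (c : seq (E * bool)) (e : E) : R :=
  if (e, false) \in c then 1 else if (e, true) \in c then -1 else 0.

End Graph.

(* Main.v *)
Require Import Defs.
From HB Require Import structures.
From mathcomp Require Import all_boot all_order all_algebra.
Set Implicit Arguments. Unset Strict Implicit. Unset Printing Implicit Defensive.
Import Order.TTheory GRing.Theory Num.Theory.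
Local Open Scope ring_scope.

Section S.
Variables (R : realFieldType) (V E : finType) (tl hd : E -> V).
Notation otl := (otail tl hd).
Notation ohd := (Defs.ohead tl hd).

Definition dv (P : pred V) (x : E -> R) : R :=
  \sum_e (((P (tl e))%:R - (P (hd e))%:R) * x e).

Lemma sum_otail (P : pred V) (x : E -> R) :
  \sum_(o | P (otl o)) ochain x o = dv P x.
Proof.
rewrite big_mkcond /= -(pair_big predT predT (fun e b =>
   if P (otl (e, b)) then ochain x (e, b) else 0)) /=.
apply: eq_bigr => e _; rewrite big_bool /= /otail /ochain /=.
by case: (P (tl e)); case: (P (hd e)); rewrite /= !(subrr, subr0, sub0r, mul0r, mul1r, mulN1r, addr0, add0r, addNr).
Qed.

Lemma flowP (x : E -> R) : is_flow tl hd x <-> forall w, dv (pred1 w) x = 0.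
Proof.
split=> H w; have := H w; by rewrite -sum_otail.
Qed.

Definition arcchain (a : E * bool) : E -> R :=
  fun e => if e == a.1 then (if a.2 then -1 else 1) else 0.

Lemma dv_arcchain P a :
  dv P (arcchain a) = (P (otl a))%:R - (P (ohd a))%:R.
Proof.
rewrite /dv (bigD1 a.1) //= big1 => [|e /negbTE He]; last by rewrite /arcchain He mulr0.
rewrite /arcchain eqxx addr0 /otail /Defs.ohead; case: a.2; last by rewrite mulr1.
by rewrite mulrN1 opprB.
Qed.

Lemma dv_sum (I : Type) (s : seq I) (f : I -> E -> R) P :
  dv P (fun e => \sum_(i <- s) f i e) = \sum_(i <- s) dv P (f i).
Proof.
rewrite /dv exchange_big /=; apply: eq_bigr => e _; by rewrite mulr_sumr.
Qed.

Lemma dv_lin P (x y : E -> R) (a : R) :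
  dv P (fun e => x e + a * y e) = dv P x + a * dv P y.
Proof.
rewrite /dv mulr_sumr -big_split /=; apply: eq_bigr => e _.
by rewrite mulrDr mulrCA.
Qed.

Definition wchain (s : seq (E * bool)) : E -> R :=
  fun e => \sum_(a <- s) arcchain a e.

Lemma wchain_flow s : perm_eq (map otl s) (map ohd s) ->
  is_flow tl hd (wchain s).
Proof.
move=> Hp; apply/flowP => w; rewrite dv_sum.
under eq_bigr do rewrite dv_arcchain.
rewrite sumrB -(big_map otl predT (fun y => ((y == w) : nat)%:R))
  -(big_map ohd predT (fun y => ((y == w) : nat)%:R)).
by rewrite (perm_big _ Hp) subrr.
Qed.


Definition crel (a b : E * bool) : bool := ohd a == otl b.

Lemma path_belast x s : path crel x s -> map ohd (belast x s) = map otl s.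
Proof.
elim: s x => [|y s IH] x //= /andP[/eqP H1 H2].
by rewrite H1 IH.
Qed.

Lemma cycle_perm c : cycle crel c -> perm_eq (map otl c) (map ohd c).
Proof.
case: c => [|a c] //= H.
have := path_belast H; rewrite belast_rcons map_rcons /= => ->.
by rewrite perm_sym perm_rcons.
Qed.

Lemma arcpath (D : {set E * bool}) x p : path (arcD tl hd D) x p ->
  exists s, [/\ {subset s <= D}, map otl s = belast x p & map ohd s = p].
Proof.
elim: p x => [|y p IH] x /=; first by move=> _; exists [::].
case/andP=> /existsP[o /andP[oD /andP[/eqP ox /eqP oy]]] /IH[s [sD s1 s2]].
exists (o :: s); split => /=; last by rewrite oy s2.
  by move=> a; rewrite inE => /orP[/eqP->|/sD].
by rewrite ox s1.
Qed.

Lemma closed_walk (D : {set E * bool}) o : o \in D ->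
  connect (arcD tl hd D) (ohd o) (otl o) ->
  exists s, [/\ {subset s <= D}, o \in s & perm_eq (map otl s) (map ohd s)].
Proof.
move=> oD /connectP[p Hp Hl]; have [s [sD s1 s2]] := arcpath Hp.
exists (o :: s); split; first by move=> a; rewrite inE => /orP[/eqP->|/sD].
  exact: mem_head.
rewrite /= s1 s2 (lastI (ohd o) p) -Hl perm_sym.
by rewrite perm_rcons.
Qed.

Lemma find_circuit (P : pred (E * bool)) (a0 : E * bool) : P a0 ->
  (forall a, P a -> exists2 b, P b & otl b = ohd a) ->
  exists c, [/\ c != [::], cycle crel c, uniq (map otl c) & all P c].
Proof.
move=> Pa0 HP.
pose nxt w := odflt a0 [pick b | P b && (otl b == w)].
pose g w := ohd (nxt w).
pose W := [pred w | [exists b, P b && (otl b == w)]].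
have nxtW w : W w -> P (nxt w) /\ otl (nxt w) = w.
  rewrite /W /= /nxt; case: pickP => [b /andP[Pb /eqP ->]|H] //=.
  by case/existsP=> b; rewrite H.
have gW w : W w -> W (g w).
  move=> /nxtW[P1 _]; have [b Pb Hb] := HP _ P1.
  by apply/existsP; exists b; rewrite Pb Hb /g eqxx.
pose x0 := otl a0.
have x0W : W x0 by apply/existsP; exists a0; rewrite Pa0 eqxx.
have iterW n : W (iter n g x0) by elim: n => //= n IH; apply: gW.
have : looping g x0 (order g x0) by exact: looping_order.
rewrite /looping => /trajectP[i lti Hi].
set y := iter i g x0.
have Hcy : fcycle g (orbit g y).
  apply/(@orbitPcycle _ g y 3 0); exists (order g x0 - i).-1.
  rewrite prednK ?subn_gt0 // /y -iterD subnK ?Hi //; exact: ltnW.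
have allW : all W (orbit g y).
  apply/allP => z /trajectP[j _ ->]; rewrite /y -iterD; exact: iterW.
exists (map nxt (orbit g y)); split.
- by rewrite -size_eq0 size_map -lt0n size_traject order_gt0.
- rewrite cycle_map; apply: (sub_in_cycle (P := W)) Hcy => //.
  move=> a b aW bW /eqP <-; rewrite /relpre /crel /=.
  by have [_ ->] := nxtW _ (gW _ aW).
- rewrite -map_comp (eq_in_map _ id _).1 ?map_id ?orbit_uniq //.
  by move=> z /(allP allW) /nxtW[_ H]; rewrite /= H.
- by rewrite all_map; apply/allP => z /(allP allW) /nxtW[H _].
Qed.


Definition rv (o : E * bool) : E * bool := (o.1, ~~ o.2).

Lemma ochain_rv (x : E -> R) o : ochain x (rv o) = - ochain x o.
Proof. by case: o => e [] /=; rewrite /ochain /= ?opprK. Qed.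

Lemma otl_rv o : otl (rv o) = ohd o.
Proof. by case: o => e []. Qed.

Lemma ochain_sum (I : Type) (s : seq I) (f : I -> E -> R) o :
  ochain (fun e => \sum_(i <- s) f i e) o = \sum_(i <- s) ochain (f i) o.
Proof. by rewrite /ochain; case: o.2 => //; rewrite sumrN. Qed.

Lemma ochain_lin (x y : E -> R) (a : R) o :
  ochain (fun e => x e + a * y e) o = ochain x o + a * ochain y o.
Proof. by rewrite /ochain; case: o.2 => //; rewrite opprD mulrN. Qed.

Lemma count_sum (T : eqType) (s : seq T) (x : T) :
  \sum_(a <- s) (((a == x) : nat)%:R : R) = (count_mem x s)%:R.
Proof.
elim: s => [|a s IH]; first by rewrite big_nil.
by rewrite big_cons IH /= natrD.
Qed.

Variable D : {set E * bool}.
Hypothesis HD : orientation_of_Gcirc tl hd D.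

Lemma inD_nb o : o \in D -> ~~ bridge tl hd o.1.
Proof.
case: o => e b oD; have := HD e; case: (bridge tl hd e) => //=.
by case/andP; case: b oD => /= ->.
Qed.

Lemma rv_notin o : o \in D -> rv o \notin D.
Proof.
move=> oD; have := HD o.1; rewrite (negbTE (inD_nb oD)).
case: o oD => e [] /= oD; rewrite /rv /= oD.
  by case: ((e, false) \in D).
by case: ((e, true) \in D).
Qed.

Lemma nb_D o : ~~ bridge tl hd o.1 -> (o \in D) || (rv o \in D).
Proof.
move=> nb; have := HD o.1; rewrite (negbTE nb).
by case: o {nb} => e [] /=; case: ((e, false) \in D); case: ((e, true) \in D).
Qed.

Lemma sameD a b : a \in D -> b \in D -> a.1 = b.1 -> a = b.
Proof.
case: a => e a; case: b => f b /= aD bD ef; subst f.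
case: (boolP (a == b)) => [/eqP -> //|ab].
have : rv (e, a) = (e, b) by rewrite /rv /=; case: a b ab {aD bD} => [] [].
by move=> H; move: (rv_notin aD); rewrite H bD.
Qed.

Definition sD (e : E) : R := (((e, false) \in D) : nat)%:R - (((e, true) \in D) : nat)%:R.

Lemma sumD (x : E -> R) : \sum_(o in D) ochain x o = \sum_e sD e * x e.
Proof.
rewrite big_mkcond /= (eq_bigr (fun p => if (p.1, p.2) \in D then ochain x (p.1, p.2) else 0)); last by case.
rewrite -(pair_big predT predT (fun e b =>
   if (e, b) \in D then ochain x (e, b) else 0)) /=.
apply: eq_bigr => e _; rewrite big_bool /= /sD /ochain /=.
by case: ((e, true) \in D); case: ((e, false) \in D); rewrite /= !(subrr, subr0, sub0r, mul0r, mul1r, mulN1r, addr0, add0r, addNr).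
Qed.

Lemma ochain_arc a o : a \in D -> o \in D ->
  ochain (arcchain a) o = ((a == o) : nat)%:R.
Proof.
move=> aD oD; rewrite /ochain /arcchain.
case: (boolP (o.1 == a.1)) => [/eqP H|H].
  have ao := sameD aD oD (esym H); subst a; rewrite eqxx.
  by case: o.2 => //=; rewrite opprK.
have -> : (a == o) = false by apply/negbTE; apply: contra H => /eqP ->.
by case: o.2; rewrite ?oppr0.
Qed.

Lemma ochain_wchain s o : all (mem D) s -> o \in D ->
  ochain (wchain s) o = (count_mem o s)%:R.
Proof.
move=> /allP sD oD; rewrite /wchain ochain_sum -count_sum big_seq_cond [RHS]big_seq_cond.
by apply: eq_bigr => a /andP[/sD aD _]; rewrite ochain_arc.
Qed.

Lemma wchain_bridge s e : all (mem D) s -> bridge tl hd e -> wchain s e = 0.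
Proof.
move=> /allP sD be; rewrite /wchain big_seq big1 // => a /sD aD.
rewrite /arcchain; case: eqP => // ea; subst e.
by move: (inD_nb aD); rewrite be.
Qed.


Lemma uniq_fst (c : seq (E * bool)) x y : uniq (map fst c) -> x \in c -> y \in c ->
  x.1 = y.1 -> x = y.
Proof.
elim: c => [|a c IH] //= /andP[ac uc].
rewrite !inE => /orP[/eqP->|xc] /orP[/eqP->|yc] //.
- by move=> H; move: ac; rewrite H (map_f fst yc).
- by move=> H; move: ac; rewrite -H (map_f fst xc).
- exact: IH.
Qed.

Lemma circ_w c : uniq (map fst c) -> forall e, circ_chain R c e = wchain c e.
Proof.
move=> uc e; have uc' := map_uniq uc.
rewrite /wchain (eq_bigr (fun a => ((a == (e, false)) : nat)%:R - ((a == (e, true)) : nat)%:R));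
  last first.
  case=> f b _; rewrite /arcchain /=; case: (boolP (e == f)) => [/eqP->|ef].
    by case: b; rewrite !xpair_eqE !eqxx /= ?subr0 ?sub0r.
  by rewrite !xpair_eqE eq_sym (negbTE ef) /= subrr.
rewrite sumrB (count_sum c (e, false)) (count_sum c (e, true)) !count_uniq_mem // /circ_chain.
case Hf: ((e, false) \in c); case Ht: ((e, true) \in c); rewrite /= ?subr0 ?sub0r ?subrr //.
by have := uniq_fst uc Hf Ht erefl.
Qed.

Lemma circ_flow c : uniq (map fst c) -> cycle crel c -> is_flow tl hd (circ_chain R c).
Proof.
move=> uc cc; have /flowP H := wchain_flow (cycle_perm cc).
apply/flowP => w; rewrite -(H w) /dv; apply: eq_bigr => e _; by rewrite circ_w.
Qed.

Lemma ochain_circ c o : {subset c <= D} -> o \in D ->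
  ochain (circ_chain R c) o = ((o \in c) : nat)%:R.
Proof.
move=> cD oD; have ro := rv_notin oD.
case: o oD ro => e [] oD ro; rewrite /ochain /circ_chain /=.
- have -> : ((e, false) \in c) = false by apply/negbTE; apply: contra ro => /cD.
  by case: ifP; rewrite ?opprK ?oppr0.
- have -> : ((e, true) \in c) = false by apply/negbTE; apply: contra ro => /cD.
  by case: ifP.
Qed.

Lemma sD_circ c e : {subset c <= D} -> uniq (map fst c) ->
  sD e * circ_chain R c e = circ_chain R c e * circ_chain R c e.
Proof.
move=> cD uc; rewrite /circ_chain /sD.
case: ifP => Hf.
  have fD := cD _ Hf; have := rv_notin fD; rewrite /rv /= => /negbTE ->.
  by rewrite fD /= subr0.
case: ifP => Ht; last by rewrite !mulr0.
have tD := cD _ Ht; have := rv_notin tD; rewrite /rv /= => /negbTE ->.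
by rewrite tD /= sub0r mulrNN.
Qed.


Lemma seq_min (T : eqType) (f : T -> R) (c : seq T) : c != [::] ->
  exists2 a, a \in c & forall b, b \in c -> f a <= f b.
Proof.
elim: c => [|a c IH] // _; case: (eqVneq c [::]) => [->|cn].
  by exists a; rewrite ?mem_head // => b; rewrite inE => /eqP->.
have [a1 a1c Ha1] := IH cn.
case: (leP (f a) (f a1)) => H.
  exists a; first exact: mem_head.
  move=> b; rewrite inE => /orP[/eqP->//|/Ha1]; exact: le_trans.
exists a1; first by rewrite inE a1c orbT.
move=> b; rewrite inE => /orP[/eqP->|/Ha1//]; exact: ltW.
Qed.

Definition Pa (x : E -> R) (a : E * bool) : bool := (a \in D) && (0 < ochain x a).

Lemma succ_arc (x : E -> R) : is_flow tl hd x -> (forall e, bridge tl hd e -> x e = 0) ->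
  (forall o, o \in D -> 0 <= ochain x o) ->
  forall a, Pa x a -> exists2 b, Pa x b & otl b = ohd a.
Proof.
move=> Fx Bx Nx a /andP[aD apos]; set w := ohd a.
case: (boolP [exists b, Pa x b && (otl b == w)]) => [/existsP[b /andP[Pb /eqP Hb]]|Hno].
  by exists b.
exfalso.
have all_le : forall o, otl o == w -> ochain x o <= 0.
  move=> o ow; rewrite leNgt; apply/negP => opos.
  case: (boolP (bridge tl hd o.1)) => [bo|nb].
    by move: opos; rewrite /ochain Bx //; case: o.2; rewrite ?oppr0 ltxx.
  case/orP: (nb_D nb) => H.
    by move/negP: Hno; apply; apply/existsP; exists o; rewrite /Pa H opos ow.
  by have := Nx _ H; rewrite ochain_rv oppr_ge0 leNgt opos.
have := Fx w; rewrite (bigD1 (rv a)) /=; last by rewrite otl_rv.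
move=> H.
have : ochain x (rv a) + \sum_(i | (otl i == w) && (i != rv a)) ochain x i < 0 + 0.
  apply: ltr_leD; first by rewrite ochain_rv oppr_lt0.
  by apply: sumr_le0 => o /andP[/all_le].
by rewrite H addr0 ltxx.
Qed.

Variable v : E -> R.
Hypothesis Hv : forall c : seq (E * bool), is_circuit tl hd c -> {subset c <= D} ->
     2 * inner v (circ_chain R c) = qf (circ_chain R c).

Definition K (x : E -> R) : R := \sum_e (2 * v e - sD e) * x e.

Lemma K_lin (x y : E -> R) (a : R) : K (fun e => x e + a * y e) = K x + a * K y.
Proof.
rewrite /K mulr_sumr -big_split /=; apply: eq_bigr => e _.
by rewrite mulrDr mulrCA.
Qed.

Lemma K_circ c : is_circuit tl hd c -> {subset c <= D} -> K (circ_chain R c) = 0.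
Proof.
move=> Hc cD; have := Hv Hc cD; case: Hc => _ _ uc _.
rewrite /K /inner /qf => H.
under eq_bigr do rewrite mulrBl.
rewrite sumrB.
under eq_bigr do rewrite -mulrA.
rewrite -mulr_sumr H.
under [X in _ - X]eq_bigr do rewrite sD_circ //.
by rewrite subrr.
Qed.


Lemma core (n : nat) (x : E -> R) : (#|[set o in D | ochain x o != 0%R]| < n)%N ->
  is_flow tl hd x -> (forall e, bridge tl hd e -> x e = 0) ->
  (forall o, o \in D -> 0 <= ochain x o) -> K x = 0.
Proof.
elim: n x => [//|n IH] x Hn Fx Bx Nx.
case: (boolP [exists o in D, ochain x o != 0]) => [/existsP[o0 /andP[o0D o0nz]] | Hnone];
  last first.
  have x0 : forall e, x e = 0.
    move=> e; case: (boolP (bridge tl hd e)) => [/Bx//|nb].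
    move: Hnone; rewrite negb_exists_in => /forall_inP Hn0.
    case/orP: (nb_D (o := (e, false)) nb) => H; have := Hn0 _ H; rewrite negbK /ochain /=.
      by move/eqP.
    by rewrite oppr_eq0 => /eqP.
  by rewrite /K big1 // => e _; rewrite x0 mulr0.
have Po0 : Pa x o0 by rewrite /Pa o0D lt0r o0nz Nx.
have [c [cn cc uc cP]] := find_circuit Po0 (succ_arc Fx Bx Nx).
have cD : {subset c <= D} by move=> a /(allP cP) /andP[].
have ucf : uniq (map fst c).
  rewrite map_inj_in_uniq; first exact: map_uniq uc.
  by move=> a b /cD aD /cD bD; apply: sameD.
have Hc : is_circuit tl hd c by [].
have [a1 a1c Ha1] := seq_min (ochain x) cn.
set m := ochain x a1.
have mpos : 0 < m by have /andP[] := allP cP _ a1c.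
pose x' := fun e => x e + (- m) * circ_chain R c e.
have Fx' : is_flow tl hd x'.
  apply/flowP => w; rewrite dv_lin.
  by have /flowP -> := Fx; have /flowP -> := circ_flow ucf cc; rewrite mulr0 addr0.
have Bx' : forall e, bridge tl hd e -> x' e = 0.
  move=> e be; rewrite /x' Bx // /circ_chain.
  have nf : ((e, false) \in c) = false.
    by apply/negbTE/negP => /cD /inD_nb; rewrite be.
  have nt : ((e, true) \in c) = false.
    by apply/negbTE/negP => /cD /inD_nb; rewrite be.
  by rewrite nf nt mulr0 addr0.
have Ox' : forall o, o \in D -> ochain x' o = ochain x o - m * ((o \in c) : nat)%:R.
  by move=> o oD; rewrite /x' ochain_lin ochain_circ // mulNr.
have Nx' : forall o, o \in D -> 0 <= ochain x' o.
  move=> o oD; rewrite Ox' //; case: (boolP (o \in c)) => oc /=.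
    by rewrite mulr1 subr_ge0; apply: Ha1.
  by rewrite mulr0 subr0; apply: Nx.
have Kx : K x = K x' by rewrite /x' K_lin K_circ // mulr0 addr0.
rewrite Kx; apply: (IH _ _ Fx' Bx' Nx').
suff Hp : (#|[set o in D | ochain x' o != 0%R]| < #|[set o in D | ochain x o != 0%R]|)%N.
  by apply: leq_trans Hp _; rewrite -ltnS.
apply: proper_card; apply/properP; split.
  apply/subsetP => o; rewrite !inE => /andP[oD]; rewrite oD Ox' //=.
  case: (boolP (o \in c)) => oc /=; last by rewrite mulr0 subr0.
  by have /andP[_ /lt0r_neq0 ->] := allP cP _ oc.
exists a1; first by rewrite inE (cD _ a1c) /= gt_eqF.
by rewrite inE negb_and Ox' ?(cD _ a1c) // a1c /= mulr1 subrr eqxx.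
Qed.


Lemma bridge_zero (x : E -> R) e : is_flow tl hd x -> bridge tl hd e -> x e = 0.
Proof.
move=> Fx be.
pose S : pred V := fun w => connect (adjS tl hd (predC1 e)) (tl e) w.
have : dv S x = 0.
  rewrite -sum_otail (partition_big otl S) //=.
  apply: big1 => w Sw; rewrite -[RHS](Fx w); apply: eq_bigl => o.
  by rewrite andb_idl // => /eqP->.
rewrite /dv (bigD1 e) //= big1 => [|e' ne].
  have -> : S (tl e) by exact: connect0.
  have -> : S (hd e) = false by apply/negbTE.
  by rewrite /= subr0 mul1r addr0.
have a1 : adjS tl hd (predC1 e) (tl e') (hd e').
  by apply/existsP; exists e'; rewrite /= ne !eqxx.
have a2 : adjS tl hd (predC1 e) (hd e') (tl e').
  by apply/existsP; exists e'; rewrite /= ne !eqxx orbT.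
have -> : S (tl e') = S (hd e').
  apply/idP/idP => H; apply: connect_trans H (connect1 _) => //.
by rewrite subrr mul0r.
Qed.

Lemma main_sec : strongly_connected tl hd D -> is_flow tl hd v ->
  2 * qf v = \sum_(o in D) ochain v o.
Proof.
move=> SC Fv.
have Bv e : bridge tl hd e -> v e = 0 by exact: bridge_zero.
have walks : forall l : seq (E * bool), {subset l <= D} -> exists s,
    [/\ all (mem D) s, perm_eq (map otl s) (map ohd s) & {subset l <= s}].
  elim => [|o l IH] lD; first by exists [::].
  have lD' : {subset l <= D} by move=> a al; apply: lD; rewrite inE al orbT.
  have [s [s1 s2 s3]] := IH lD'.
  have oD := lD o (mem_head _ _).
  have conn : connect (adjS tl hd (nonbridge tl hd)) (ohd o) (otl o).
    apply: connect1; apply/existsP; exists o.1; rewrite /nonbridge (inD_nb oD) /=.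
    by case: o {oD lD} => e [] /=; rewrite !eqxx ?orbT.
  have [w [w1 w2 w3]] := closed_walk oD (SC _ _ conn).
  exists (w ++ s); split.
  - rewrite all_cat s1 andbT; apply/allP => a /w1; done.
  - by rewrite !map_cat perm_cat.
  - move=> a; rewrite inE => /orP[/eqP->|/s3 H]; rewrite mem_cat ?w2 ?H ?orbT //.
have eD : {subset enum D <= D} by move=> a; rewrite mem_enum.
have [s [sD sperm sall]] := walks (enum D) eD.
pose g := wchain s.
have Fg : is_flow tl hd g := wchain_flow sperm.
have Bg e : bridge tl hd e -> g e = 0 by exact: wchain_bridge.
have Og o : o \in D -> ochain g o = (count_mem o s)%:R by exact: ochain_wchain.
have Kg : K g = 0.
  apply: (core (ltnSn _) Fg Bg) => o oD; by rewrite Og // ler0n.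
pose t := \sum_e `|v e|.
have t0 : 0 <= t by apply: sumr_ge0 => e _; apply: normr_ge0.
pose y := fun e => v e + t * g e.
have Ky : K y = 0.
  apply: (core (ltnSn _)).
  - apply/flowP => w; rewrite dv_lin.
    by have /flowP -> := Fv; have /flowP -> := Fg; rewrite mulr0 addr0.
  - by move=> e be; rewrite /y Bv // Bg // mulr0 addr0.
  - move=> o oD; rewrite /y ochain_lin Og //.
    have c1 : 1 <= (count_mem o s)%:R :> R.
      by rewrite ler1n -has_count has_pred1 sall // mem_enum.
    have h1 : - ochain v o <= `|v o.1|.
      by rewrite /ochain; case: o.2; rewrite ?opprK ?ler_norm // -normrN ler_norm.
    have h2 : `|v o.1| <= t by rewrite /t (bigD1 o.1) //= lerDl sumr_ge0.
    have h3 : t <= t * (count_mem o s)%:R by apply: ler_peMr.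
    rewrite -[ochain v o]opprK addrC subr_ge0.
    exact: le_trans h1 (le_trans h2 h3).
have Kv : K v = 0 by move: Ky; rewrite /y K_lin Kg mulr0 addr0.
apply/eqP; rewrite -subr_eq0 sumD; apply/eqP; move: Kv.
rewrite /K /qf /inner.
under eq_bigr do rewrite mulrBl.
rewrite sumrB.
under eq_bigr do rewrite -mulrA.
by rewrite -mulr_sumr.
Qed.

End S.

Unset Implicit Arguments.

Theorem mainTheorem20 (R : realFieldType) (V E : finType) (tl hd : E -> V)
  (D : {set E * bool}) (v : E -> R) :
  connected_graph tl hd ->
  orientation_of_Gcirc tl hd D ->
  strongly_connected tl hd D ->
  is_flow tl hd v ->
  (forall c : seq (E * bool), is_circuit tl hd c -> {subset c <= D} ->
     2 * inner v (circ_chain R c) = qf (circ_chain R c)) ->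
  2 * qf v = \sum_(o in D) ochain v o.
Proof.
move=> _ HD SC Fv Hv; exact: (main_sec HD Hv SC Fv).
Qed.
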